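(* Let $(R_n)_{n\in\mathbb Z}$ satisfy the $(1,4)$-system $$R_{2n}CR_{2n-2}=1+R_{2n-1},\qquad R_{2n+1}CR_{2n-1}=1+R_{2n}^4\qquad(n\in\mathbb Z),$$ and set $u_n=R_{2n}$. Then there is an element $K$ such that for all $n\in\mathbb Z$ $$u_{n+2}C-u_{n+1}K+u_n=0\qquad\text{and}\qquad u_{n+2}-Ku_{n+1}+Cu_n=0.$$ The values of $C$ and $K$ in the two cases of initial data are as follows. (a) For the initial data $R_0=yxy^{-1}$, $R_1=y$ (so that $u_0=yxy^{-1}$ and $u_1=(1+y)x^{-1}$), with $x,y$ non-commuting indeterminates and $C=xyx^{-1}y^{-1}$, one has $$K=\big(x^2+((1+y)x^{-1})^2\big)y^{-1}.$$ (b) For the initial data $R_1=YXY^{-1}$, $R_2=Y$, with $X,Y$ non-commuting indeterminates and $C=XYX^{-1}Y^{-1}$, one has $$K=\big(Y^2+((1+X)Y^{-1})^2\big)YX^{-1}Y^{-1}.$$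
   Context: Work in the free skew field (non-commutative rational functions) over $\mathbb C$ generated by the relevant pair of indeterminates. The recursion determines $R_n$ for all $n\in\mathbb Z$ from two consecutive values. *)

(* Defs.v *)
From HB Require Import structures.
From mathcomp Require Import all_boot all_order all_algebra.
Set Implicit Arguments. Unset Strict Implicit. Unset Printing Implicit Defensive.
Import Order.TTheory GRing.Theory Num.Theory.
Local Open Scope ring_scope.

Definition skew_field_char0 (D : unitRingType) : Prop :=
  (forall a : D, a != 0 -> a \is a GRing.unit) /\ [pchar D] =i pred0.

Definition sys14 (D : unitRingType) (C : D) (R : int -> D) : Prop :=
  forall n : int,
    R (2 * n) * C * R (2 * n - 2) = 1 + R (2 * n - 1) /\
    R (2 * n + 1) * C * R (2 * n - 1) = 1 + R (2 * n) ^+ 4.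

Definition commC (D : unitRingType) (x y : D) : D := x * y * x^-1 * y^-1.

Definition lin_rels (D : unitRingType) (C K : D) (R : int -> D) : Prop :=
  forall n : int,
    R (2 * (n + 2)) * C - R (2 * (n + 1)) * K + R (2 * n) = 0 /\
    R (2 * (n + 2)) - K * R (2 * (n + 1)) + C * R (2 * n) = 0.

(* Main.v *)
Require Import Defs.
From HB Require Import structures.
From mathcomp Require Import all_boot all_order all_algebra.
From mathcomp Require Import ring.
Import GRing.Theory.
Local Open Scope ring_scope.


Lemma P1 (D : unitRingType) (b q c C : D) :
  b \is a GRing.unit -> C \is a GRing.unit ->
  c * C * b = 1 + q -> q * C * b = b * q -> b * c = C^-1 + q.
Proof.
move=> ub uC E Q.
have hc : c = (1 + q) / b / C by rewrite -E !mulrK.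
rewrite hc !mulrA mulrDr mulr1 -Q mulrDl mulrK // mulrDl mulrK // divrr //.
by rewrite mul1r.
Qed.

Lemma KEY (D : unitRingType) (b q c C : D) :
  q \is a GRing.unit ->
  c * C * b = 1 + q -> q * C * b = b * q -> c * q^-1 * b = 1 + q^-1.
Proof.
move=> uq E Q.
have hCb : C * b = q^-1 * (b * q) by rewrite -Q -!mulrA mulKr.
have : c * q^-1 * b * q = 1 + q by rewrite -E -!mulrA hCb.
move=> h; apply: (mulIr uq); rewrite h mulrDl mul1r mulVr //.
by rewrite addrC.
Qed.

Lemma e4 (D : unitRingType) (b : D) : b ^+ 4 = b * b * b * b.
Proof. by rewrite !exprS expr0 mulr1 !mulrA. Qed.

Lemma F1 (D : unitRingType) (b p q C : D) :
  b \is a GRing.unit -> q \is a GRing.unit ->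
  b * C * p = p * b -> q * C * p = 1 + b ^+ 4 ->
  b^-1 * p * b^-1 = q^-1 * (b^-1 * b^-1) + q^-1 * (b * b).
Proof.
move=> ub uq Q E.
have hCp : C * p = b^-1 * p * b by rewrite -mulrA -Q -mulrA mulKr.
have h1 : b^-1 * p * b = q^-1 * (1 + b ^+ 4) by rewrite -hCp -E -mulrA mulKr.
have -> : b^-1 * p * b^-1 = b^-1 * p * b * b^-1 * b^-1 by rewrite mulrK.
rewrite h1 e4 mulrDr mulr1 !mulrA mulrDl mulrDl !mulrK //.
Qed.

Lemma F2 (D : unitRingType) (c q r C : D) :
  c \is a GRing.unit -> q \is a GRing.unit ->
  c * C * q = q * c -> r * C * q = 1 + c ^+ 4 ->
  c^-1 * r * c^-1 = (c^-1 * c^-1) * q^-1 + (c * c) * q^-1.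
Proof.
move=> uc uq Q E.
have hCq : C * q = c^-1 * q * c by rewrite -mulrA -Q -mulrA mulKr.
have h1 : r * c^-1 * q * c = 1 + c ^+ 4 by rewrite -E -[r * C * q]mulrA hCq !mulrA.
have h2 : r * c^-1 = (1 + c ^+ 4) * c^-1 * q^-1 by rewrite -h1 !mulrK.
rewrite -mulrA h2 e4 !mulrA mulrDr mulr1 mulrDl mulrDl.
by rewrite !mulrA mulVr // mul1r mulrK.
Qed.


Definition G {D : unitRingType} (b q c : D) : D := (1 + q^-1) * (b^-1 * b^-1) + q^-1 * (b * b) + c * b^-1.

Lemma L1 (D : unitRingType) (b p q c C : D) :
  b \is a GRing.unit -> q \is a GRing.unit -> C \is a GRing.unit ->
  c * C * b = 1 + q -> q * C * p = 1 + b ^+ 4 ->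
  q * C * b = b * q -> b * C * p = p * b ->
  b^-1 * (1 + C^-1 + p + q) * b^-1 = G b q c.
Proof.
move=> ub uq uC E1 E2 Qb Qp.
have hp := F1 _ _ _ _ _ ub uq Qp E2.
have hbc := P1 _ _ _ _ _ ub uC E1 Qb.
have -> : 1 + C^-1 + p + q = 1 + p + (C^-1 + q) by rewrite -!addrA (addrCA C^-1).
rewrite -hbc !mulrDr !mulrDl mulr1 hp mulKr //.
by rewrite /G mulrDl mul1r !addrA.
Qed.

Lemma L2 (D : unitRingType) (b q c r C : D) :
  b \is a GRing.unit -> q \is a GRing.unit -> c \is a GRing.unit -> C \is a GRing.unit ->
  c * C * b = 1 + q -> r * C * q = 1 + c ^+ 4 ->
  q * C * b = b * q -> c * C * q = q * c ->
  c^-1 * (1 + C^-1 + q + r) * c^-1 = G b q c.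
Proof.
move=> ub uq uc uC E1 E2 Qb Qc.
have hbc := P1 _ _ _ _ _ ub uC E1 Qb.
have hr := F2 _ _ _ _ _ uc uq Qc E2.
have k := KEY _ _ _ _ _ uq E1 Qb.
rewrite -(addrA 1 C^-1 q) -hbc !mulrDr !mulrDl mulr1 hr (mulrA c^-1 b c) mulrK //.
have h1 : c^-1 * c^-1 + c^-1 * c^-1 * q^-1 = c^-1 * q^-1 * b.
  by rewrite -{1}(mulr1 (c^-1 * c^-1)) -mulrDr -k !mulrA divrK.
have h2 : c^-1 * b + c^-1 * q^-1 * b = q^-1 * (b * b).
  rewrite -(mulrA c^-1 q^-1 b) -mulrDr -{1}(mul1r b) -mulrDl -k !mulrA mulVr //.
  by rewrite mul1r -mulrA.
have h3 : c * c * q^-1 = c * b^-1 + (1 + q^-1) * (b^-1 * b^-1).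
  have -> : c * c * q^-1 = c * (c * q^-1 * b) * b^-1 by rewrite !mulrA mulrK.
  rewrite k mulrDr mulr1 mulrDl; congr (_ + _).
  by rewrite -k !mulrA mulrK.
rewrite addrA (addrC (c^-1 * c^-1)) -(addrA (c^-1 * b)) h1 h2 h3 /G.
by rewrite (addrC (c * b^-1)) addrA (addrC (q^-1 * (b * b))).
Qed.


Lemma int_ind2 (P : int -> Prop) : (forall k, P (k+1) <-> P k) -> forall k, P k <-> P 0.
Proof.
move=> h.
have pos : forall n : nat, P (n%:Z) <-> P 0.
  elim=> [//|n IH]. by rewrite -addn1 PoszD h.
have neg : forall n : nat, P (- (n%:Z)) <-> P 0.
  elim=> [|n IH]; first by rewrite oppr0.
  rewrite -IH -h -addn1 PoszD opprD addrNK. done.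
case=> n; first exact: pos.
by rewrite NegzE neg.
Qed.

Lemma link (D : unitRingType) (A B Cc C F : D) :
  A \is a GRing.unit -> C \is a GRing.unit -> Cc \is a GRing.unit ->
  Cc * C * A = 1 + F -> F * B = B * F ->
  (B * C * A = A * B) <-> (Cc * C * B = B * Cc).
Proof.
move=> uA uC uCc E FB.
have uCA : C * A \is a GRing.unit by rewrite unitrMl.
have uCcC : Cc * C \is a GRing.unit by rewrite unitrMl.
have h1 : B * Cc * (C * A) = (1 + F) * B.
  have -> : B * Cc * (C * A) = B * (Cc * C * A) by rewrite !mulrA.
  by rewrite E mulrDr mulrDl mulr1 mul1r FB.
split=> H.
  apply: (mulIr uCA); rewrite h1 -E.
  have -> : Cc * C * B * (C * A) = Cc * C * (B * C * A) by rewrite !mulrA.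
  by rewrite H !mulrA.
apply: (mulrI uCcC); rewrite !mulrA.
have -> : Cc * C * B * C * A = B * Cc * (C * A) by rewrite H !mulrA.
by rewrite h1 -E.
Qed.

Definition Qe {D : unitRingType} (C : D) (R : int -> D) (k : int) :=
  R (2*k+1) * C * R (2*k) = R (2*k) * R (2*k+1).
Definition Qo {D : unitRingType} (C : D) (R : int -> D) (k : int) :=
  R (2*k+2) * C * R (2*k+1) = R (2*k+1) * R (2*k+2).

Lemma sysE1 (D : unitRingType) (C : D) (R : int -> D) (k : int) :
  sys14 C R -> R (2*k+2) * C * R (2*k) = 1 + R (2*k+1).
Proof.
move=> hs; have [h _] := hs (k+1).
have e1 : 2 * (k + 1) - 2 = 2 * k by ring.
have e2 : 2 * (k + 1) - 1 = 2 * k + 1 by ring.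
have e3 : 2 * (k + 1) = 2 * k + 2 by ring.
by rewrite e1 e2 e3 in h.
Qed.

Lemma sysE2 (D : unitRingType) (C : D) (R : int -> D) (k : int) :
  sys14 C R -> R (2*k+3) * C * R (2*k+1) = 1 + R (2*k+2) ^+ 4.
Proof.
move=> hs; have [_ h] := hs (k+1).
have e1 : 2 * (k + 1) + 1 = 2 * k + 3 by ring.
have e2 : 2 * (k + 1) - 1 = 2 * k + 1 by ring.
have e3 : 2 * (k + 1) = 2 * k + 2 by ring.
by rewrite e1 e2 e3 in h.
Qed.

Lemma Qall {D : unitRingType} (C : D) (R : int -> D) :
  C \is a GRing.unit -> (forall n, R n \is a GRing.unit) -> sys14 C R ->
  Qe C R 0 -> forall k, Qe C R k /\ Qo C R k.
Proof.
move=> uC uR hs h0.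
have eo : forall k, Qe C R k <-> Qo C R k.
  move=> k; apply: link => //; exact: sysE1.
have st : forall k, Qe C R (k+1) <-> Qe C R k.
  move=> k; rewrite (eo k); symmetry.
  have e1 : 2 * (k + 1) + 1 = 2 * k + 3 by ring.
  have e3 : 2 * (k + 1) = 2 * k + 2 by ring.
  rewrite /Qe /Qo e1 e3; apply: (@link _ _ _ _ _ (R (2*k+2) ^+ 4)) => //; first exact: (sysE2 _ _ _ _ hs).
  by rewrite -exprSr exprS.
move=> k; have hk : Qe C R k by rewrite int_ind2.
by split => //; rewrite -eo.
Qed.

Definition Hseq {D : unitRingType} (C : D) (R : int -> D) (m : int) :=
  (R (2 * m))^-1 * (1 + C^-1 + R (2 * m-1) + R (2 * m+1)) * (R (2 * m))^-1.

Lemma H_G (D : unitRingType) (C : D) (R : int -> D) :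
  C \is a GRing.unit -> (forall n, R n \is a GRing.unit) -> sys14 C R ->
  Qe C R 0 -> forall m, Hseq C R m = G (R (2 * m)) (R (2 * m+1)) (R (2 * m+2)).
Proof.
move=> uC uR hs h0.
have QA := @Qall D C R uC uR hs h0.
  move=> m; rewrite /Hseq; apply: (@L1 D (R (2 * m)) (R (2 * m - 1)) (R (2 * m + 1)) (R (2 * m + 2)) C) => //.
  - exact: (sysE1 _ _ _ _ hs).
  - by have [_ ->] := hs m.
  - by have [] := QA m.
  have [_ h] := QA (m - 1); move: h; rewrite /Qo.
  have e1 : 2 * (m - 1) + 2 = 2 * m by ring.
  have e2 : 2 * (m - 1) + 1 = 2 * m - 1 by ring.
  by rewrite e1 e2.
Qed.

Lemma H_const (D : unitRingType) (C : D) (R : int -> D) :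
  C \is a GRing.unit -> (forall n, R n \is a GRing.unit) -> sys14 C R ->
  Qe C R 0 -> forall m, Hseq C R m = Hseq C R 0.
Proof.
move=> uC uR hs h0.
have QA := @Qall D C R uC uR hs h0.

have HG : forall m, Hseq C R m = G (R (2 * m)) (R (2 * m+1)) (R (2 * m+2)).
  move=> m; rewrite /Hseq; apply: (@L1 D (R (2 * m)) (R (2 * m - 1)) (R (2 * m + 1)) (R (2 * m + 2)) C) => //.
  - exact: (sysE1 _ _ _ _ hs).
  - by have [_ ->] := hs m.
  - by have [] := QA m.
  have [_ h] := QA (m - 1); move: h; rewrite /Qo.
  have e1 : 2 * (m - 1) + 2 = 2 * m by ring.
  have e2 : 2 * (m - 1) + 1 = 2 * m - 1 by ring.
  by rewrite e1 e2.
have HG2 : forall m, Hseq C R (m+1) = G (R (2 * m)) (R (2 * m+1)) (R (2 * m+2)).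
  move=> m; rewrite /Hseq.
  have e1 : 2 * (m + 1) - 1 = 2 * m + 1 by ring.
  have e2 : 2 * (m + 1) + 1 = 2 * m + 3 by ring.
  have e3 : 2 * (m + 1) = 2 * m + 2 by ring.
  rewrite e1 e2 e3; apply: L2 => //.
  - exact: (sysE1 _ _ _ _ hs).
  - exact: (sysE2 _ _ _ _ hs).
  - by have [] := QA m.
  - by have [] := QA m.
move=> m.
have P : forall k, Hseq C R k = Hseq C R 0 <-> Hseq C R 0 = Hseq C R 0.
  apply: (int_ind2 (fun k => Hseq C R k = Hseq C R 0)).
  by move=> k; rewrite HG2 (HG k).
by rewrite P.
Qed.

Lemma AC1 (D : zmodType) (a b c d : D) : a + b + c + d = a + d + (b + c).
Proof. by rewrite -!addrA; congr (a + _); rewrite [RHS]addrC -addrA. Qed.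
Lemma AC2 (D : zmodType) (a b c d : D) : a + b + c + d = b + d + (a + c).
Proof. rewrite -!addrA addrCA; congr (b + _). by rewrite [RHS]addrC -addrA. Qed.

Lemma lin_local (D : unitRingType) (a0 b c w1 w2 C K : D) :
  b \is a GRing.unit ->
  b * K * b = 1 + C^-1 + w1 + w2 ->
  c * C * b = 1 + w2 -> b * C * a0 = 1 + w1 ->
  a0 * b = C^-1 + w1 -> b * c = C^-1 + w2 ->
  c * C - b * K + a0 = 0 /\ c - K * b + C * a0 = 0.
Proof.
move=> ub T Ec Eb Pa Pb.
have ac : 1 + C^-1 + w1 + w2 = 1 + w2 + (C^-1 + w1) by rewrite AC1.
have ac2 : 1 + C^-1 + w1 + w2 = C^-1 + w2 + (1 + w1) by rewrite AC2.
split.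
  have h : c * C + a0 = b * K.
    by apply: (mulIr ub); rewrite mulrDl Ec Pa T ac.
  by rewrite addrAC h subrr.
have h : c + C * a0 = K * b.
  by apply: (mulrI ub); rewrite mulrDr Pb mulrA Eb mulrA T ac2.
by rewrite addrAC h subrr.
Qed.

Lemma main_gen (D : unitRingType) (C K : D) (R : int -> D) (m0 : int) :
  C \is a GRing.unit -> (forall n, R n \is a GRing.unit) -> sys14 C R ->
  Qe C R 0 -> K = Hseq C R m0 -> lin_rels C K R.
Proof.
move=> uC uR hs h0 hK n.
have QA := @Qall D C R uC uR hs h0.
have Hc := @H_const D C R uC uR hs h0.
have HK : K = Hseq C R (n+1) by rewrite hK (Hc m0) (Hc (n+1)).
have e1 : 2 * (n + 2) = 2 * (n + 1) + 2 by ring.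
rewrite e1.
have Ec := @sysE1 D C R (n+1) hs.
have [Eb _] := hs (n+1).
have e2 : 2 * (n + 1) - 2 = 2 * n by ring.
rewrite e2 in Eb.
have [Qn _] := QA n.
rewrite /Qe (_ : 2 * n + 1 = 2 * (n + 1) - 1) in Qn; last by ring.
have [Qn1 _] := QA (n+1).
apply: (@lin_local D (R (2 * n)) (R (2 * (n + 1))) (R (2 * (n + 1) + 2)) (R (2 * (n + 1) - 1)) (R (2 * (n + 1) + 1)) C K).
- exact: uR.
- rewrite HK /Hseq !mulrA mulrV ?uR // mul1r divrK ?uR //.
- exact: Ec.
- exact: Eb.
- exact: (P1 _ _ _ _ _ (uR _) uC Eb Qn).
- exact: (P1 _ _ _ _ _ (uR _) uC Ec Qn1).
Qed.

Lemma partA (D : unitRingType) (x y : D) (R : int -> D) :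
     x \is a GRing.unit -> y \is a GRing.unit ->
     (forall n, R n \is a GRing.unit) ->
     R 0 = y * x * y^-1 -> R 1 = y ->
     sys14 (commC x y) R ->
     lin_rels (commC x y) ((x ^+ 2 + ((1 + y) * x^-1) ^+ 2) * y^-1) R.
Proof.
move=> ux uy uR R0 R1 hs.
set C := commC x y.
have uC : C \is a GRing.unit by rewrite /C /commC !unitrMl ?unitrV.
have CR0 : C * R 0 = x by rewrite R0 /C /commC !mulrA divrK // divrK // mulrK.
have h0 : Qe C R 0.
  rewrite /Qe mulr0 add0r -mulrA CR0 R0 R1.
  by rewrite divrK.
have R2 : R 2 = (1 + y) / x.
  have := @sysE1 D C R 0 hs; rewrite mulr0 add0r -mulrA CR0 R1 => <-.
  by rewrite mulrK.
apply: (@main_gen D C _ R 0) => //.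
rewrite (@H_G D C R uC uR hs h0 0) mulr0 add0r R2 R0 R1 /G.
have hb : (y * x / y)^-1 = y / x / y.
  have e : y * x / y * (y / x / y) = 1 by rewrite !mulrA divrK // mulrK // mulrV.
  by rewrite -[RHS](mulKr (uR 0)) R0 e mulr1.
rewrite hb.
have T1 : (1 + y^-1) * (y / x / y * (y / x / y)) = (1 + y) / x / x / y.
  by rewrite !mulrA divrK // mulrDl mul1r mulVr // addrC.
have T2 : y^-1 * (y * x / y * (y * x / y)) = x * x / y.
  by rewrite !mulrA divrK // mulVr // mul1r.
have T3 : (1 + y) / x * (y / x / y) = (1 + y) / x * y / x / y by rewrite !mulrA.
rewrite T1 T2 T3 expr2 expr2 mulrDl.
have -> : (1 + y) / x * ((1 + y) / x) / y = (1 + y) / x / x / y + (1 + y) / x * y / x / y.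
  by rewrite !mulrA mulrDr mulr1 !mulrDl.
by rewrite addrA (addrC (x * x / y)).
Qed.

Lemma AC5 (D : zmodType) (a1 a2 a3 a4 a5 : D) :
  a5 + ((a4 + a2) + (a1 + a3)) = a1 + a2 + a3 + (a4 + a5).
Proof.
rewrite [LHS]addrC [RHS]addrA; congr (_ + a5).
rewrite [RHS]addrC !addrA; congr (_ + a3).
by rewrite -!addrA (addrC a2).
Qed.

Lemma partB (D : unitRingType) (X Y : D) (R : int -> D) :
     X \is a GRing.unit -> Y \is a GRing.unit ->
     (forall n, R n \is a GRing.unit) ->
     R 1 = Y * X * Y^-1 -> R 2 = Y ->
     sys14 (commC X Y) R ->
     lin_rels (commC X Y) ((Y ^+ 2 + ((1 + X) * Y^-1) ^+ 2) * Y * X^-1 * Y^-1) R.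
Proof.
move=> uX uY uR R1 R2 hs.
set C := commC X Y.
have uC : C \is a GRing.unit by rewrite /C /commC !unitrMl ?unitrV.
have CR1 : C * R 1 = X by rewrite R1 /C /commC !mulrA divrK // divrK // mulrK.
have h0 : Qe C R 0.
  have E : R 2 * C * R 0 = 1 + R 1.
    by have := @sysE1 D C R 0 hs; rewrite mulr0 add0r.
  have [_ L] := @link D (R 0) (R 1) (R 2) C (R 1) (uR 0) uC (uR 2) E erefl.
  rewrite /Qe mulr0 add0r; apply: L.
  by rewrite -mulrA CR1 R1 R2 divrK.
have R3 : R 3 = (1 + Y ^+ 4) / X.
  have := @sysE2 D C R 0 hs; rewrite mulr0 add0r -mulrA CR1 R2 => <-.
  by rewrite mulrK.
have hC : C^-1 = Y * X / Y / X.
  have e : C * (Y * X / Y / X) = 1.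
    by rewrite /C /commC !mulrA divrK // divrK // mulrK // mulrV.
  by rewrite -[RHS](mulKr uC) e mulr1.
apply: (@main_gen D C _ R 1) => //.
rewrite /Hseq mulr1 (_ : 2 - 1 = 1) // (_ : 2 + 1 = 3) // R1 R2 R3 hC e4 !expr2.
rewrite !(mulrDr, mulrDl, mulr1, mul1r) !mulrA.
rewrite !(divrK uY, mulrK uY, mulVr uY, mulrV uY, divrK uX, mulrK uX, mulVr uX, mulrV uX, mul1r, mulr1).
exact: AC5.
Qed.

Theorem theorem4p2 :
  (* (a) initial data R_0 = y x y^-1, R_1 = y *)
  (forall (D : unitRingType) (x y : D) (R : int -> D),
     skew_field_char0 D ->
     x \is a GRing.unit -> y \is a GRing.unit ->
     (forall n, R n \is a GRing.unit) ->
     R 0 = y * x * y^-1 -> R 1 = y ->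
     sys14 (commC x y) R ->
     lin_rels (commC x y) ((x ^+ 2 + ((1 + y) * x^-1) ^+ 2) * y^-1) R) /\
  (* (b) initial data R_1 = Y X Y^-1, R_2 = Y *)
  (forall (D : unitRingType) (X Y : D) (R : int -> D),
     skew_field_char0 D ->
     X \is a GRing.unit -> Y \is a GRing.unit ->
     (forall n, R n \is a GRing.unit) ->
     R 1 = Y * X * Y^-1 -> R 2 = Y ->
     sys14 (commC X Y) R ->
     lin_rels (commC X Y) ((Y ^+ 2 + ((1 + X) * Y^-1) ^+ 2) * Y * X^-1 * Y^-1) R).
Proof.
split.
  move=> D x y R _; exact: partA.
move=> D X Y R _; exact: partB.
Qed.
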